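(* Let $(y_1,z_1)$ be a nontrivial solution of $$\ddot y_1+3y_1+\tfrac32y_1^3+\tfrac92y_1z_1^2=0,\qquad \ddot z_1+9z_1+\tfrac92z_1^3+\tfrac{27}{2}z_1y_1^2=0.$$ Let $t_1<t_2$ be two consecutive critical points of $y_1(t)$. Then there exists $\tau\in(t_1,t_2)$ such that $z_1(\tau)=0$. *)

(* Defs.v *)
From Stdlib Require Import Reals.
From Coquelicot Require Import Coquelicot.
Open Scope R_scope.

Definition is_solution (y z : R -> R) : Prop :=
  forall t : R,
    ex_derive y t /\ ex_derive (Derive y) t /\
    ex_derive z t /\ ex_derive (Derive z) t /\
    Derive (Derive y) t + 3 * y t + 3 / 2 * y t ^ 3 + 9 / 2 * y t * z t ^ 2 = 0 /\
    Derive (Derive z) t + 9 * z t + 9 / 2 * z t ^ 3 + 27 / 2 * z t * y t ^ 2 = 0.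

Definition nontrivial (y z : R -> R) : Prop :=
  exists t : R, y t <> 0 \/ z t <> 0.

Definition critical_point (f : R -> R) (t : R) : Prop := Derive f t = 0.

Definition consecutive_critical_points (f : R -> R) (t1 t2 : R) : Prop :=
  t1 < t2 /\ critical_point f t1 /\ critical_point f t2 /\
  (forall t, t1 < t < t2 -> ~ critical_point f t).

(* Main.v *)
Require Import Defs.
From Stdlib Require Import Reals Lra.
From Coquelicot Require Import Coquelicot.
Open Scope R_scope.

Lemma deriv_right (p : R -> R) l x b : x < b -> derivable_pt_lim p x l -> p x = 0 ->
  (forall t, x < t < b -> 0 < p t) -> 0 <= l.
Proof.
  intros Hxb Hd Hp Hpos.
  destruct (Rle_lt_dec 0 l) as [|Hl]; auto. exfalso.
  destruct (Hd (-l/2)) as [d Hd']; [lra|].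
  pose proof (cond_pos d) as dpos.
  pose (h := Rmin (d/2) ((b-x)/2)).
  assert (h1 : h <= d/2) by apply Rmin_l.
  assert (h2 : h <= (b-x)/2) by apply Rmin_r.
  assert (h3 : 0 < h) by (apply Rmin_pos; lra).
  specialize (Hd' h ltac:(lra) ltac:(rewrite Rabs_pos_eq; lra)).
  rewrite Hp in Hd'.
  apply Rabs_def2 in Hd'. destruct Hd' as [Ha Hb].
  specialize (Hpos (x+h) ltac:(lra)).
  assert (E : (p (x+h) - 0)/h * h = p (x+h)) by (field; lra).
  nra.
Qed.

Lemma deriv_left (p : R -> R) l x a : a < x -> derivable_pt_lim p x l -> p x = 0 ->
  (forall t, a < t < x -> 0 < p t) -> l <= 0.
Proof.
  intros Hxb Hd Hp Hpos.
  destruct (Rle_lt_dec l 0) as [|Hl]; auto. exfalso.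
  destruct (Hd (l/2)) as [d Hd']; [lra|].
  pose proof (cond_pos d) as dpos.
  pose (h := Rmin (d/2) ((x-a)/2)).
  assert (h1 : h <= d/2) by apply Rmin_l.
  assert (h2 : h <= (x-a)/2) by apply Rmin_r.
  assert (h3 : 0 < h) by (apply Rmin_pos; lra).
  specialize (Hd' (-h) ltac:(lra) ltac:(rewrite Rabs_Ropp, Rabs_pos_eq; lra)).
  rewrite Hp in Hd'.
  apply Rabs_def2 in Hd'. destruct Hd' as [Ha Hb].
  specialize (Hpos (x+-h) ltac:(lra)).
  assert (E : (p (x+-h) - 0)/(-h) * (-h) = p (x+-h)) by (field; lra).
  nra.
Qed.

Lemma cont_right (f : R -> R) x b : x < b -> continuity_pt f x ->
  (forall t, x < t < b -> 0 < f t) -> 0 <= f x.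
Proof.
  intros Hxb Hc Hpos.
  destruct (Rle_lt_dec 0 (f x)) as [|Hl]; auto. exfalso.
  unfold continuity_pt, continue_in, limit1_in, limit_in in Hc. simpl in Hc.
  destruct (Hc (- f x) ltac:(lra)) as [d [dpos Hd]].
  pose (h := Rmin (d/2) ((b-x)/2)).
  assert (h1 : h <= d/2) by apply Rmin_l.
  assert (h2 : h <= (b-x)/2) by apply Rmin_r.
  assert (h3 : 0 < h) by (apply Rmin_pos; lra).
  specialize (Hd (x+h)).
  unfold R_dist, D_x, no_cond in Hd.
  assert (Hr : Rabs (x + h - x) < d) by (rewrite Rabs_pos_eq; lra).
  assert (Hne : x <> x + h) by (intro; lra).
  specialize (Hd (conj (conj I Hne) Hr)).
  apply Rabs_def2 in Hd. specialize (Hpos (x+h) ltac:(lra)). lra.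
Qed.

Lemma cont_left (f : R -> R) x a : a < x -> continuity_pt f x ->
  (forall t, a < t < x -> 0 < f t) -> 0 <= f x.
Proof.
  intros Hxb Hc Hpos.
  destruct (Rle_lt_dec 0 (f x)) as [|Hl]; auto. exfalso.
  unfold continuity_pt, continue_in, limit1_in, limit_in in Hc. simpl in Hc.
  destruct (Hc (- f x) ltac:(lra)) as [d [dpos Hd]].
  pose (h := Rmin (d/2) ((x-a)/2)).
  assert (h1 : h <= d/2) by apply Rmin_l.
  assert (h2 : h <= (x-a)/2) by apply Rmin_r.
  assert (h3 : 0 < h) by (apply Rmin_pos; lra).
  specialize (Hd (x-h)).
  unfold R_dist, D_x, no_cond in Hd.
  assert (Hr : Rabs (x - h - x) < d) by (rewrite Rabs_left; lra).
  assert (Hne : x <> x - h) by (intro; lra).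
  specialize (Hd (conj (conj I Hne) Hr)).
  apply Rabs_def2 in Hd. specialize (Hpos (x-h) ltac:(lra)). lra.
Qed.

Lemma sign_const (f : R -> R) t1 t2 : continuity f -> t1 < t2 ->
  (forall t, t1 < t < t2 -> f t <> 0) ->
  forall t, t1 < t < t2 -> 0 < f ((t1+t2)/2) * f t.
Proof.
  intros Hc Hlt Hnz t Ht.
  pose (m := (t1+t2)/2).
  destruct (Rle_lt_dec (f m * f t) 0) as [Hle|]; auto. exfalso.
  destruct (Rle_lt_dec m t) as [Hmt|Hmt].
  - destruct (IVT_cor f m t Hc Hmt Hle) as [c [Hc1 Hc2]].
    apply (Hnz c); auto. unfold m in *; lra.
  - assert (Hle' : f t * f m <= 0) by lra.
    destruct (IVT_cor f t m Hc ltac:(lra) Hle') as [c [Hc1 Hc2]].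
    apply (Hnz c); auto. unfold m in *; lra.
Qed.

Theorem proposition4p2 (y z : R -> R) (t1 t2 : R) :
  is_solution y z -> nontrivial y z ->
  consecutive_critical_points y t1 t2 ->
  exists tau : R, t1 < tau < t2 /\ z tau = 0.
Proof.
  intros Hs _ [Hlt [Hc1 [Hc2 Hnc]]].
  unfold critical_point in *.
  destruct (Classical_Prop.classic (exists tau, t1 < tau < t2 /\ z tau = 0)) as [|Hno]; auto.
  exfalso.
  assert (Hz : forall t, t1 < t < t2 -> z t <> 0).
  { intros t Ht E. apply Hno. exists t. auto. }
  assert (cy : continuity y).
  { intro t. apply derivable_continuous_pt, ex_derive_Reals_0. apply Hs. }
  assert (cy1 : continuity (Derive y)).
  { intro t. apply derivable_continuous_pt, ex_derive_Reals_0. apply Hs. }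
  assert (cz : continuity z).
  { intro t. apply derivable_continuous_pt, ex_derive_Reals_0. apply Hs. }
  pose (a := Derive y ((t1+t2)/2)).
  pose (b := z ((t1+t2)/2)).
  assert (Ha : forall t, t1 < t < t2 -> 0 < a * Derive y t)
    by (apply sign_const; auto).
  assert (Hb : forall t, t1 < t < t2 -> 0 < b * z t)
    by (apply sign_const; auto).
  pose (F := fun t => a * b * (Derive y t * Derive z t
             + y t * z t * (3 + 3/2 * y t ^ 2 + 3/2 * z t ^ 2))).
  pose (F' := fun t => - a * b * Derive y t * z t * (6 + 9 * y t ^ 2 + 3 * z t ^ 2)).
  assert (HF : forall t, derivable_pt_lim F t (F' t)).
  { intro t. apply is_derive_Reals.
    destruct (Hs t) as [d1 [d2 [d3 [d4 [e1 e2]]]]].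
    pose proof (Derive_correct _ _ d1) as D1.
    pose proof (Derive_correct _ _ d2) as D2.
    pose proof (Derive_correct _ _ d3) as D3.
    pose proof (Derive_correct _ _ d4) as D4.
    unfold F, F'.
    auto_derive.
    - repeat split; auto.
    - change (fun x : R => Derive y x) with (Derive y).
      change (fun x : R => Derive z x) with (Derive z).
      change (fun x : R => y x) with y.
      change (fun x : R => z x) with z.
      replace (Derive (Derive y) t) with
        (- (3 * y t + 3 / 2 * y t ^ 3 + 9 / 2 * y t * z t ^ 2)) by lra.
      replace (Derive (Derive z) t) with
        (- (9 * z t + 9 / 2 * z t ^ 3 + 27 / 2 * z t * y t ^ 2)) by lra.
      match goal with |- ?A = ?B => change (@eq R A B) end. field. }
  destruct (MVT_cor2 F F' t1 t2 Hlt (fun c _ => HF c)) as [c [Hmvt Hc]].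
  assert (HFc : F' c < 0).
  { assert (P : 0 < 6 + 9 * y c ^ 2 + 3 * z c ^ 2) by nra.
    pose proof (Ha c Hc). pose proof (Hb c Hc).
    assert (E : F' c = - ((a * Derive y c) * (b * z c) * (6 + 9 * y c ^ 2 + 3 * z c ^ 2)))
      by (unfold F'; ring).
    rewrite E. assert (0 < (a * Derive y c) * (b * z c) * (6 + 9 * y c ^ 2 + 3 * z c ^ 2)).
    { apply Rmult_lt_0_compat; [apply Rmult_lt_0_compat|]; auto. }
    lra. }
  assert (Hd : forall t, derivable_pt_lim (fun s => a * Derive y s) t (a * Derive (Derive y) t)).
  { intro t. apply is_derive_Reals. apply is_derive_scal. apply Derive_correct. apply Hs. }
  assert (Hcz : forall t, continuity_pt (fun s => b * z s) t).
  { intro t. apply (continuity_pt_scal z b t). apply cz. }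
  assert (Ay1 : 0 <= a * Derive (Derive y) t1).
  { apply (deriv_right (fun s => a * Derive y s) _ t1 t2); auto.
    rewrite Hc1; ring. }
  assert (Ay2 : a * Derive (Derive y) t2 <= 0).
  { apply (deriv_left (fun s => a * Derive y s) _ t2 t1); auto.
    all: try (intros; apply Ha; lra). all: rewrite Hc2; ring. }
  assert (Bz1 : 0 <= b * z t1).
  { apply (cont_right (fun s => b * z s) t1 t2); auto. }
  assert (Bz2 : 0 <= b * z t2).
  { apply (cont_left (fun s => b * z s) t2 t1); auto. all: intros; apply Hb; lra. }
  destruct (Hs t1) as [_ [_ [_ [_ [e1 _]]]]].
  destruct (Hs t2) as [_ [_ [_ [_ [e2 _]]]]].
  assert (A1 : a * y t1 <= 0).
  { assert (P : 0 < 3 + 3 / 2 * y t1 ^ 2 + 9 / 2 * z t1 ^ 2) by nra.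
    assert (E : a * Derive (Derive y) t1 = - (a * y t1) * (3 + 3 / 2 * y t1 ^ 2 + 9 / 2 * z t1 ^ 2))
      by (replace (Derive (Derive y) t1) with (- (3 * y t1 + 3 / 2 * y t1 ^ 3 + 9 / 2 * y t1 * z t1 ^ 2)) by lra; ring).
    nra. }
  assert (A2 : 0 <= a * y t2).
  { assert (P : 0 < 3 + 3 / 2 * y t2 ^ 2 + 9 / 2 * z t2 ^ 2) by nra.
    assert (E : a * Derive (Derive y) t2 = - (a * y t2) * (3 + 3 / 2 * y t2 ^ 2 + 9 / 2 * z t2 ^ 2))
      by (replace (Derive (Derive y) t2) with (- (3 * y t2 + 3 / 2 * y t2 ^ 3 + 9 / 2 * y t2 * z t2 ^ 2)) by lra; ring).
    nra. }
  assert (F1 : F t1 <= 0).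
  { assert (P : 0 < 3 + 3 / 2 * y t1 ^ 2 + 3 / 2 * z t1 ^ 2) by nra.
    assert (E : F t1 = (a * y t1) * (b * z t1) * (3 + 3 / 2 * y t1 ^ 2 + 3 / 2 * z t1 ^ 2))
      by (unfold F; rewrite Hc1; ring).
    rewrite E. assert (0 <= - (a * y t1) * (b * z t1)) by (apply Rmult_le_pos; lra).
    nra. }
  assert (F2 : 0 <= F t2).
  { assert (P : 0 < 3 + 3 / 2 * y t2 ^ 2 + 3 / 2 * z t2 ^ 2) by nra.
    assert (E : F t2 = (a * y t2) * (b * z t2) * (3 + 3 / 2 * y t2 ^ 2 + 3 / 2 * z t2 ^ 2))
      by (unfold F; rewrite Hc2; ring).
    rewrite E. assert (0 <= (a * y t2) * (b * z t2)) by (apply Rmult_le_pos; lra).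
    nra. }
  nra.
Qed.
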